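(* Suppose Assumptions (A2) and (A3) below hold and $x$ is such that $\mathtt{P}_{N_p}^{\mathrm{G}}(x)$ has a feasible solution for the tubes $\mathsf{Z}_k^j=\{z\mid Tz\leq \tau_k^j\}$, $(j,k)\in I_{N_r:N_p-1}$. Then $\mathtt{P}_{N_p}^{\mathrm{G}}(x^+)$ is feasible for all $x^+\in \mathrm{conv}(\{A_i x+B_i u\})\oplus\mathsf W,\,\forall i\in\Gamma_p$, if the control input applied to the system follows the control policy $u=v+K_{\mathrm{inv}}(x-z)$.
   Context: Consider the uncertain linear system $x^+=Ax+Bu+w$ with $(A,B)\in\mathrm{conv}(\{(A_i,B_i),\,i\in\Gamma_p\})$, $\Gamma_p=\{1,\dots,n_p\}$, $w\in\mathsf W$ (convex polytope containing the origin in its interior), polytopic constraints $x\in\mathbb X$, $u\in\mathbb U$. The disturbance set is split as $\mathsf W\subseteq\overline{\mathsf W}\oplus\underline{\mathsf W}$ with $\overline{\mathsf W}=\mathrm{conv}\{w_l,\,l\in\Gamma_{\overline w}\}$ (large) and $\underline{\mathsf W}$ (small). Nominal model $z^+=A_iz+B_iv+w$, $w\in\overline{\mathsf W}$; control $u=v+K_{\mathrm{inv}}(x-z)$; $\mathsf S$ satisfies $(A_i+B_iK_{\mathrm{inv}})\mathsf S\oplus\underline{\mathsf W}\subseteq\mathsf S$; tightened sets $\mathbb Z=\mathbb X\ominus\mathsf S=\{z\mid Fz\le\mathbf 1\}$, $\mathbb V=\mathbb U\ominus K_{\mathrm{inv}}\mathsf S=\{v\mid Gv\le\mathbf 1\}$.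 The tube-enhanced multi-stage MPC problem uses a scenario tree with nodes $z_k^j$ and inputs $v_k^j$ ($I_{k_1:k_2}$ = tree indices at stages $k_1,\dots,k_2$), branching $z_{k+1}^c=A_iz_k^j+B_iv_k^j+w_l$ for all $i,l$ up to the robust horizon $N_r$ with $z_k^j\in\mathbb Z$, $v_k^j\in\mathbb V$, root constraint $x\in\{z_0^1\}\oplus\mathsf S$, and beyond $N_r$ tubes under the policy $v_k^j+K_{\mathrm{pred}}z$. $\mathtt{P}^{\mathrm G}_{N_p}(x)$ is its convex ''general complexity tube'' implementation: tubes $\mathsf Z_k^j=\{z\mid Tz\le\tau_k^j\}$ with fixed $T$ (such that $\{z\mid Tz\le\mathbf 1\}$ is $\lambda$-contractive) and decision variables $\tau_k^j$; the set inclusions are replaced via Farkas' lemma (for nonempty polytopes, $\{x\mid T_1x\le\tau_1\}\subseteq\{x\mid T_2x\le\tau_2\}$ iff there is a nonnegative $P$ with $PT_1=T_2$, $P\tau_1\le\tau_2$) using nonnegative matrices computed offline with $P_iT=T(A_i+B_iK_{\mathrm{pred}})$, $P_xT=F$, $P_uT=GK_{\mathrm{pred}}$, $P_QT=Q$, giving linear constraints $P_i\tau_k^j+TB_iv_k^j+Tw_l\le\tau_{k+1}^j$, $P_x\tau_k^j\le\mathbf 1$, $Gv_k^j+P_u\tau_k^j\le\mathbf 1$, terminal $P_i\tau_{N_p}^j+Tw_l\le\tau_{N_p}^j$, $Tz_{N_r}^j\le\tau_{N_r}^j$; the worst-case tube stage cost is upper bounded by slack variables $\gamma_k^j$ ($-\mu\le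 P_Q\tau_k^j-Qy_k^j\le\mu$ with $y_k^j\in\mathbb Z_f$, $-\eta\le Rv_k^j\le\eta$, $\mathbf 1^T\mu+\mathbf 1^T\eta\le\gamma_k^j$). (A2) $\mathsf S$ is a convex compact disturbance invariant polytope with $\mathsf S\subset\mathbb X$, $K_{\mathrm{inv}}\mathsf S\subset\mathbb U$ ($\mathsf S=\{0\}$ if $\underline{\mathsf W}=\{0\}$). (A3) $\mathbb Z_f\subseteq\mathbb X\ominus\mathsf S$ is a robust positively invariant polytope containing the origin for the nominal model with $K_f=K_{\mathrm{pred}}$, $K_f\mathbb Z_f\subseteq\mathbb U\ominus K_{\mathrm{inv}}\mathsf S$, and for all tubes $\mathsf Z\subseteq\mathbb Z_f$, $(A_i+B_iK_f)\mathsf Z\oplus\overline{\mathsf W}\subseteq\mathsf Z^+\subseteq\mathbb Z_f$ for all $i$. *)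

(* Defs.v *)
From mathcomp Require Import all_boot all_order all_algebra.
Set Implicit Arguments. Unset Strict Implicit. Unset Printing Implicit Defensive.
Import Order.TTheory GRing.Theory Num.Theory.
Local Open Scope ring_scope.

Definition vset (R : realFieldType) (n : nat) := 'cV[R]_n -> Prop.

Definition vle (R : realFieldType) (n : nat) (u v : 'cV[R]_n) : Prop :=
  forall i, u i ord0 <= v i ord0.

Definition ones (R : realFieldType) (n : nat) : 'cV[R]_n := const_mx 1.

Definition mxnonneg (R : realFieldType) (m n : nat) (M : 'M[R]_(m, n)) : Prop :=
  forall i j, 0 <= M i j.

Definition is_polytope (R : realFieldType) (n : nat) (P : vset R n) : Prop :=
  (exists (m : nat) (H : 'M[R]_(m, n)) (h : 'cV[R]_m),
      forall x, P x <-> vle (H *m x) h) /\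
  (exists M : R, forall x, P x -> forall i, `|x i ord0| <= M).

Definition zero_in_interior (R : realFieldType) (n : nat) (P : vset R n) : Prop :=
  exists eps : R, 0 < eps /\ forall x : 'cV[R]_n, (forall i, `|x i ord0| <= eps) -> P x.

Definition conv_pts (R : realFieldType) (n k : nat) (p : 'I_k -> 'cV[R]_n) : vset R n :=
  fun x => exists th : 'I_k -> R, (forall l, 0 <= th l) /\ \sum_l th l = 1 /\
                                   x = \sum_l th l *: p l.

Definition msum (R : realFieldType) (n : nat) (P Q : vset R n) : vset R n :=
  fun x => exists a b, P a /\ Q b /\ x = a + b.

Section TubeMPC.
Variables (R : realFieldType) (nx nu np nw nT nF nG nQ nRc : nat).
Variables (A : 'I_np -> 'M[R]_(nx, nx)) (B : 'I_np -> 'M[R]_(nx, nu)).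
Variables (wv : 'I_nw -> 'cV[R]_nx).      (* vertices w_l of \overline{W} *)
Variables (S : vset R nx) (Kinv Kpred : 'M[R]_(nu, nx)).
Variables (F : 'M[R]_(nF, nx)) (G : 'M[R]_(nG, nu)).
Variables (T : 'M[R]_(nT, nx)) (P : 'I_np -> 'M[R]_(nT, nT)).
Variables (Px : 'M[R]_(nF, nT)) (Pu : 'M[R]_(nG, nT)) (PQ : 'M[R]_(nQ, nT)).
Variables (Q : 'M[R]_(nQ, nx)) (Rc : 'M[R]_(nRc, nu)) (Zf : vset R nx).
Variables (Nr Np : nat).

(* a branch of the scenario tree: model index i and disturbance vertex l *)
Definition branch := ('I_np * 'I_nw)%type.

(* Tree nodes at stage k <= Nr are the paths
   p : seq branch of size k (root = [::], children of p are rcons p (i,l)).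
   For stages Nr <= k <= Np every leaf p (size p = Nr) carries a tube
   {z | T z <= tau p k} and nominal inputs vtb p k (policy vtb p k + Kpred z). *)
Definition PG_cons (x : 'cV[R]_nx)
    (zt : seq branch -> 'cV[R]_nx) (vt : seq branch -> 'cV[R]_nu)
    (tau : seq branch -> nat -> 'cV[R]_nT) (vtb : seq branch -> nat -> 'cV[R]_nu)
    (y : seq branch -> nat -> 'cV[R]_nx)
    (mu : seq branch -> nat -> 'cV[R]_nQ) (eta : seq branch -> nat -> 'cV[R]_nRc)
    (gam : seq branch -> nat -> R) : Prop :=
  S (x - zt [::]) /\
  (forall p : seq branch, (size p < Nr)%N ->
     vle (F *m zt p) (ones R nF) /\ vle (G *m vt p) (ones R nG) /\
     forall i l, zt (rcons p (i, l)) = A i *m zt p + B i *m vt p + wv l) /\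
  (forall p : seq branch, size p = Nr ->
     vle (T *m zt p) (tau p Nr) /\
     (forall k, (Nr <= k < Np)%N ->
        (forall i l, vle (P i *m tau p k + T *m (B i *m vtb p k) + T *m wv l)
                         (tau p k.+1)) /\
        vle (Px *m tau p k) (ones R nF) /\
        vle (G *m vtb p k + Pu *m tau p k) (ones R nG) /\
        (* slack upper bound of the worst-case tube stage cost *)
        Zf (y p k) /\
        vle (- mu p k) (PQ *m tau p k - Q *m y p k) /\
        vle (PQ *m tau p k - Q *m y p k) (mu p k) /\
        vle (- eta p k) (Rc *m vtb p k) /\ vle (Rc *m vtb p k) (eta p k) /\
        \sum_i mu p k i ord0 + \sum_i eta p k i ord0 <= gam p k) /\
     (* terminal tube: constraint satisfaction (nominal input 0) and invariance *)
     vle (Px *m tau p Np) (ones R nF) /\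
     vle (Pu *m tau p Np) (ones R nG) /\
     (forall i l, vle (P i *m tau p Np + T *m wv l) (tau p Np))).

Definition PG_feasible (x : 'cV[R]_nx) : Prop :=
  exists zt vt tau vtb y mu eta gam, PG_cons x zt vt tau vtb y mu eta gam.

End TubeMPC.

(* Main.v *)
Require Import Defs.
From mathcomp Require Import all_boot all_order all_algebra zify.
Import Order.TTheory GRing.Theory Num.Theory.
Local Open Scope ring_scope.

Section Helpers.
Set Implicit Arguments. Unset Strict Implicit.
Section H.
Variables (R : realFieldType) (I : finType) (c : I -> R).

Lemma L1 m n (f g : I -> 'M[R]_(m,n)) :
  \sum_b c b *: (f b + g b) = \sum_b c b *: f b + \sum_b c b *: g b.
Proof. by rewrite -big_split /=; apply: eq_bigr => b _; rewrite scalerDr. Qed.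

Lemma L2 m n p (M : 'M[R]_(m,n)) (f : I -> 'M[R]_(n,p)) :
  \sum_b c b *: (M *m f b) = M *m \sum_b c b *: f b.
Proof. by rewrite mulmx_sumr; apply: eq_bigr => b _; rewrite scalemxAr. Qed.

Lemma L3 m n (w : 'M[R]_(m,n)) : \sum_b c b = 1 -> \sum_b c b *: w = w.
Proof. by move=> h; rewrite -scaler_suml h scale1r. Qed.

Lemma vle_sum n (f g : I -> 'cV[R]_n) : (forall b, 0 <= c b) ->
  (forall b, vle (f b) (g b)) -> vle (\sum_b c b *: f b) (\sum_b c b *: g b).
Proof.
move=> hc h i; rewrite !summxE; apply: ler_sum => b _; rewrite !mxE.
by apply: ler_wpM2l => //; apply: h.
Qed.

Lemma vle_sum1 n (f : I -> 'cV[R]_n) g : (forall b, 0 <= c b) -> \sum_b c b = 1 ->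
  (forall b, vle (f b) g) -> vle (\sum_b c b *: f b) g.
Proof. by move=> hc h1 h; have e := L3 g h1; rewrite -e; apply: vle_sum. Qed.
End H.

Lemma vle_trans (R : realFieldType) n (a b d : 'cV[R]_n) : vle a b -> vle b d -> vle a d.
Proof. by move=> h1 h2 i; apply: le_trans (h1 i) (h2 i). Qed.

Lemma vle_add (R : realFieldType) n (a b d e : 'cV[R]_n) : vle a b -> vle d e -> vle (a + d) (b + e).
Proof. by move=> h1 h2 i; rewrite !mxE; apply: lerD. Qed.

Lemma vle_refl (R : realFieldType) n (a : 'cV[R]_n) : vle a a.
Proof. by []. Qed.

Lemma vle_mul (R : realFieldType) m n (M : 'M[R]_(m,n)) u v : mxnonneg M -> vle u v -> vle (M *m u) (M *m v).
Proof.
move=> hM h i; rewrite !mxE; apply: ler_sum => j _.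
by apply: ler_wpM2l => //; apply: h.
Qed.

Lemma sum_prod_split (R : realFieldType) np nw m (th : 'I_np -> R) (phi : 'I_nw -> R)
  (g : 'I_np -> 'cV[R]_m) (h : 'I_nw -> 'cV[R]_m) :
  \sum_i th i = 1 -> \sum_j phi j = 1 ->
  \sum_(b : 'I_np * 'I_nw) (th b.1 * phi b.2) *: (g b.1 + h b.2)
   = \sum_i th i *: g i + \sum_j phi j *: h j.
Proof.
move=> h1 h2.
rewrite -(pair_bigA _ (fun i j => (th i * phi j) *: (g i + h j))) /=.
rewrite (eq_bigr (fun i => th i *: g i + th i *: \sum_j phi j *: h j)); last first.
  move=> i _; rewrite (eq_bigr (fun j => th i *: (phi j *: g i) + th i *: (phi j *: h j))).
    by rewrite big_split /= -!scaler_sumr -scaler_suml h2 scale1r.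
  by move=> j _; rewrite scalerDr !scalerA.
by rewrite big_split /= -scaler_suml h1 scale1r.
Qed.

Lemma sum_prod1 (R : realFieldType) np nw (th : 'I_np -> R) (phi : 'I_nw -> R) :
  \sum_i th i = 1 -> \sum_j phi j = 1 ->
  \sum_(b : 'I_np * 'I_nw) (th b.1 * phi b.2) = 1.
Proof.
move=> h1 h2; rewrite -(pair_bigA _ (fun i j => th i * phi j)) /=.
rewrite (eq_bigr (fun i => th i)) // => i _.
by rewrite -mulr_sumr h2 mulr1.
Qed.

Lemma S_conv (R : realFieldType) n (S : vset R n) (I : finType) (c : I -> R) (f : I -> 'cV[R]_n) :
  is_polytope S -> (forall b, 0 <= c b) -> \sum_b c b = 1 -> (forall b, S (f b)) ->
  S (\sum_b c b *: f b).
Proof.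
move=> [[m [H [h HS]]] _] c0 c1 hf; apply/HS.
rewrite -L2; apply: vle_sum1 => // b; exact/HS.
Qed.

Lemma zz (V : zmodType) (a b c d : V) : a + (b + d) - (c + b) = a - c + d.
Proof. by rewrite opprD addrACA [b + d]addrC addrK. Qed.

Lemma vle_absN (R : realFieldType) n (v : 'cV[R]_n) : vle (- \col_j `|v j ord0|) v.
Proof. by move=> j; rewrite !mxE; apply: lerNnormlW. Qed.

Lemma vle_abs (R : realFieldType) n (v : 'cV[R]_n) : vle v (\col_j `|v j ord0|).
Proof. by move=> j; rewrite mxE; apply: ler_norm. Qed.
End Helpers.

Theorem corollary1
  (R : realFieldType) (nx nu np nw nT nF nG nQ nRc : nat)
  (A : 'I_np -> 'M[R]_(nx, nx)) (B : 'I_np -> 'M[R]_(nx, nu))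
  (X : vset R nx) (U : vset R nu)
  (W Wu : vset R nx) (wv : 'I_nw -> 'cV[R]_nx)
  (S : vset R nx) (Kinv Kpred : 'M[R]_(nu, nx))
  (F : 'M[R]_(nF, nx)) (G : 'M[R]_(nG, nu))
  (T : 'M[R]_(nT, nx)) (lam : R) (P : 'I_np -> 'M[R]_(nT, nT))
  (Px : 'M[R]_(nF, nT)) (Pu : 'M[R]_(nG, nT)) (PQ : 'M[R]_(nQ, nT))
  (Q : 'M[R]_(nQ, nx)) (Rc : 'M[R]_(nRc, nu)) (Zf : vset R nx)
  (Nr Np : nat)
  (* standing setting *)
  (HX : is_polytope X) (HU : is_polytope U)
  (HW : is_polytope W) (HW0 : zero_in_interior W)
  (HWsplit : forall w, W w -> msum (conv_pts wv) Wu w)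
  (HSinv : forall i s wu, S s -> Wu wu -> S ((A i + B i *m Kinv) *m s + wu))
  (HZ : forall z, vle (F *m z) (ones R nF) <-> (forall s, S s -> X (z + s)))
  (HV : forall v, vle (G *m v) (ones R nG) <-> (forall s, S s -> U (v + Kinv *m s)))
  (Hlam : 0 <= lam < 1)
  (HTcontr : forall i z, vle (T *m z) (ones R nT) ->
                vle (T *m ((A i + B i *m Kpred) *m z)) (lam *: ones R nT))
  (HPnn : forall i, mxnonneg (P i)) (HPxnn : mxnonneg Px)
  (HPunn : mxnonneg Pu) (HPQnn : mxnonneg PQ)
  (HP : forall i, P i *m T = T *m (A i + B i *m Kpred))
  (HPx : Px *m T = F) (HPu : Pu *m T = G *m Kpred) (HPQ : PQ *m T = Q)
  (HNr : (1 <= Nr <= Np)%N)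
  (* Assumption (A2) *)
  (HA2poly : is_polytope S)
  (HA2X : forall s, S s -> X s)
  (HA2U : forall s, S s -> U (Kinv *m s))
  (HA2zero : (forall w, Wu w <-> w = 0) -> forall s, S s <-> s = 0)
  (* Assumption (A3), with K_f = Kpred *)
  (HA3poly : is_polytope Zf) (HA3zero : Zf 0)
  (HA3X : forall z, Zf z -> forall s, S s -> X (z + s))
  (HA3U : forall z, Zf z -> forall s, S s -> U (Kpred *m z + Kinv *m s))
  (HA3rpi : forall i z w, Zf z -> conv_pts wv w ->
               Zf ((A i + B i *m Kpred) *m z + w))
  (HA3tube : forall tau : 'cV[R]_nT, (forall z, vle (T *m z) tau -> Zf z) ->
     exists taup : 'cV[R]_nT,
       (forall i z w, vle (T *m z) tau -> conv_pts wv w ->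
          vle (T *m ((A i + B i *m Kpred) *m z + w)) taup) /\
       (forall z, vle (T *m z) taup -> Zf z)) :
  forall (x : 'cV[R]_nx) zt vt tau vtb y mu eta gam,
    PG_cons A B wv S F G T P Px Pu PQ Q Rc Zf Nr Np x zt vt tau vtb y mu eta gam ->
    let u := vt [::] + Kinv *m (x - zt [::]) in
    forall xp : 'cV[R]_nx,
      msum (conv_pts (fun i => A i *m x + B i *m u)) W xp ->
      PG_feasible A B wv S F G T P Px Pu PQ Q Rc Zf Nr Np xp.
Proof.
move=> x zt vt tau vtb y mu eta gam [Hroot [Hrob Hleaf]] u xp.
move=> [a [w [[th [th0 [th1 ->]]] [HWw ->]]]].
case: (HWsplit w HWw) => wb [wu [[phi [phi0 [phi1 ->]]] [Hwu ->]]].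
move/andP: HNr => [hNr1 hNrp].
pose c := fun b : 'I_np * 'I_nw => th b.1 * phi b.2.
have c0 : forall b, 0 <= c b by move=> b; apply: mulr_ge0.
have c1 : \sum_b c b = 1 by apply: sum_prod1.
pose vtbx q k := if (k < Np)%N then vtb q k else (0 : 'cV[R]_nu).
have Lk : forall q k, size q = Nr -> (Nr <= k <= Np)%N ->
   vle (Px *m tau q k) (ones R nF) /\
   vle (G *m vtbx q k + Pu *m tau q k) (ones R nG) /\
   forall i l, vle (P i *m tau q k + T *m (B i *m vtbx q k) + T *m wv l)
                   (tau q (minn k.+1 Np)).
  move=> q k hq /andP[h1 h2]; have [HT [Hk [HPx' [HPu' Hterm]]]] := Hleaf q hq.
  rewrite /vtbx; case: (ltnP k Np) => hk.
    have [Hs [Hx [Hg _]]] := Hk k (introT andP (conj h1 hk)).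
    by rewrite (minn_idPl hk).
  have -> : k = Np by apply/eqP; rewrite eqn_leq h2 hk.
  rewrite (minn_idPr (leqnSn Np)) mulmx0 add0r; split => //; split => //.
  by move=> i l; rewrite mulmx0 mulmx0 addr0.
pose Zc (p : seq (branch np nw)) := \sum_b c b *: zt (b :: p).
pose Vc (p : seq (branch np nw)) := if (size p < Nr.-1)%N then \sum_b c b *: vt (b :: p)
             else \sum_b c b *: (vtbx (b :: p) Nr + Kpred *m zt (b :: p)).
pose zt' (p : seq (branch np nw)) := if (size p < Nr)%N then Zc p else
   match rev p with
   | b :: _ => A b.1 *m Zc (take Nr.-1 p) + B b.1 *m Vc (take Nr.-1 p) + wv b.2
   | [::] => 0 end.
pose tau' (p : seq (branch np nw)) k := \sum_b c b *: tau (b :: take Nr.-1 p) (minn k.+1 Np).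
pose vtb' (p : seq (branch np nw)) k := \sum_b c b *: vtbx (b :: take Nr.-1 p) k.+1.
pose y' (p : seq (branch np nw)) (k : nat) := (0 : 'cV[R]_nx).
pose mu' p k := \col_j `|(PQ *m tau' p k - Q *m y' p k) j ord0|.
pose eta' p k := \col_j `|(Rc *m vtb' p k) j ord0|.
pose gam' p k := \sum_i mu' p k i ord0 + \sum_i eta' p k i ord0.
exists zt', Vc, tau', vtb', y', mu', eta', gam'.
split.
  have hz : zt' [::] = Zc [::] by rewrite /zt' hNr1.
  rewrite hz /Zc.
  have [_ [_ Hd]] := Hrob [::] hNr1.
  rewrite (eq_bigr (fun b => c b *: ((A b.1 *m zt [::] + B b.1 *m vt [::]) + wv b.2))); last first.
    by move=> [i l] _; rewrite Hd.
  rewrite /c (@sum_prod_split _ _ _ _ th phi (fun i => A i *m zt [::] + B i *m vt [::]) wv th1 phi1).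
  pose Y i := (A i + B i *m Kinv) *m (x - zt [::]) + wu.
  have -> : \sum_i th i *: (A i *m x + B i *m u) + (\sum_i phi i *: wv i + wu) -
     (\sum_i th i *: (A i *m zt [::] + B i *m vt [::]) + \sum_j phi j *: wv j)
     = \sum_i th i *: Y i.
    rewrite /Y [RHS]L1 (L3 _ th1) zz; congr (_ + _).
    rewrite -sumrB; apply: eq_bigr => i _; rewrite -scalerBr; congr (_ *: _).
    by rewrite /u mulmxDr mulmxDl -mulmxA zz -mulmxBr.
  apply: S_conv => // i; apply: HSinv => //.
split.
  move=> p hp; have hz : zt' p = Zc p by rewrite /zt' hp.
  rewrite hz; split; [|split].
  - rewrite /Zc -L2; apply: vle_sum1 => // b.
    case: (ltnP (size p) Nr.-1) => hp'.
      have hq : ((size p).+1 < Nr)%N by lia.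
      by have [] := Hrob (b :: p) hq.
    have hq : (size p).+1 = Nr by lia.
    have [HT _] := Hleaf (b :: p) hq.
    rewrite -HPx -mulmxA; apply: vle_trans (vle_mul HPxnn HT) _.
    by have [] := Lk (b :: p) Nr hq (introT andP (conj (leqnn Nr) hNrp)).
  - rewrite /Vc; case: ifP => hp'; [move/idP: hp' => hp'|move/negbT: hp' => hp']; rewrite -L2; apply: vle_sum1 => // b.
      have hq : ((size p).+1 < Nr)%N by lia.
      by have [_ []] := Hrob (b :: p) hq.
    have hq : (size p).+1 = Nr by lia.
    have [HT _] := Hleaf (b :: p) hq.
    rewrite mulmxDr mulmxA -HPu -mulmxA.
    apply: vle_trans (vle_add (vle_refl _) (vle_mul HPunn HT)) _.
    by have [_ []] := Lk (b :: p) Nr hq (introT andP (conj (leqnn Nr) hNrp)).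
  - move=> i l; case: (ltnP (size p) Nr.-1) => hp'.
      have h1 : (size (rcons p (i,l)) < Nr)%N by rewrite size_rcons; lia.
      rewrite /zt' h1 /Zc /Vc hp'.
      rewrite (eq_bigr (fun b => c b *: (A i *m zt (b::p) + B i *m vt (b::p) + wv l))); last first.
        move=> b _; have hq : ((size p).+1 < Nr)%N by lia.
        by have [_ [_ Hd]] := Hrob (b :: p) hq; rewrite -Hd.
      by rewrite !L1 !L2 (L3 _ c1).
    have hf : ((size p).+1 < Nr)%N = false by apply/negbTE; lia.
    have ht : take Nr.-1 (rcons p (i, l)) = p by rewrite -cats1 take_size_cat //; lia.
    by rewrite /zt' size_rcons hf rev_rcons /= ht.
move=> p'; case/lastP: p' => [|p [i l]]; first by move=> /= h; lia.
rewrite size_rcons => hp.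
have hNN : (Nr <= Nr <= Np)%N by rewrite leqnn hNrp.
have ht : take Nr.-1 (rcons p (i, l)) = p by rewrite -cats1 take_size_cat //; lia.
have htau : forall k, tau' (rcons p (i,l)) k = \sum_b c b *: tau (b :: p) (minn k.+1 Np) by move=> k; rewrite /tau' ht.
have hvtb : forall k, vtb' (rcons p (i,l)) k = \sum_b c b *: vtbx (b :: p) k.+1 by move=> k; rewrite /vtb' ht.
have hf : ((size p).+1 < Nr)%N = false by apply/negbTE; lia.
have hzt : zt' (rcons p (i,l)) = A i *m Zc p + B i *m Vc p + wv l by rewrite /zt' size_rcons hf rev_rcons /= ht.
have hVc : Vc p = \sum_b c b *: (vtbx (b :: p) Nr + Kpred *m zt (b :: p)).
  by rewrite /Vc ifF //; apply/negbTE; lia.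
split; [|split; [|split; [|split]]].
- rewrite hzt htau hVc /Zc.
  have -> : T *m (A i *m (\sum_b c b *: zt (b :: p)) + B i *m (\sum_b c b *: (vtbx (b :: p) Nr + Kpred *m zt (b :: p))) + wv l)
     = \sum_b c b *: (T *m (A i *m zt (b :: p) + B i *m (vtbx (b :: p) Nr + Kpred *m zt (b :: p)) + wv l)).
    by rewrite L2 !L1 !L2 (L3 _ c1) L1 L2.
  apply: vle_sum => // b.
  have [HT _] := Hleaf (b :: p) hp.
  have [_ [_ Hs]] := Lk (b :: p) Nr hp hNN.
  apply: vle_trans (Hs i l).
  have -> : T *m (A i *m zt (b :: p) + B i *m (vtbx (b :: p) Nr + Kpred *m zt (b :: p)) + wv l)
     = P i *m (T *m zt (b :: p)) + T *m (B i *m vtbx (b :: p) Nr) + T *m wv l.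
    rewrite mulmxA HP -mulmxA mulmxDl !mulmxDr !mulmxA.
    congr (_ + _); rewrite addrA addrAC //.
  by apply: vle_add => //; apply: vle_add => //; apply: vle_mul.
- move=> k /andP[hk1 hk2].
  have hK : (Nr <= k.+1 <= Np)%N by apply/andP; split => //; apply: leqW.
  have hm : minn k.+1 Np = k.+1 by apply/minn_idPl.
  split; [|split; [|split; [|split; [|split; [|split; [|split; [|split]]]]]]].
  + move=> i' l'; rewrite !htau hvtb hm.
    have -> : P i' *m (\sum_b c b *: tau (b :: p) k.+1) + T *m (B i' *m (\sum_b c b *: vtbx (b :: p) k.+1)) + T *m wv l'
       = \sum_b c b *: (P i' *m tau (b :: p) k.+1 + T *m (B i' *m vtbx (b :: p) k.+1) + T *m wv l').
      by rewrite !L1 !L2 (L3 _ c1).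
    apply: vle_sum => // b.
    by have [_ [_ Hs]] := Lk (b :: p) k.+1 hp hK; apply: Hs.
  + rewrite htau hm -L2; apply: vle_sum1 => // b.
    by have [] := Lk (b :: p) k.+1 hp hK.
  + rewrite htau hvtb hm -!L2 -L1; apply: vle_sum1 => // b.
    by have [_ []] := Lk (b :: p) k.+1 hp hK.
  + exact: HA3zero.
  + exact: vle_absN.
  + exact: vle_abs.
  + exact: vle_absN.
  + exact: vle_abs.
  + exact: lexx.
- rewrite htau (minn_idPr (leqnSn Np)) -L2; apply: vle_sum1 => // b.
  by have [_ [_ []]] := Hleaf (b :: p) hp.
- rewrite htau (minn_idPr (leqnSn Np)) -L2; apply: vle_sum1 => // b.
  by have [_ [_ [_ []]]] := Hleaf (b :: p) hp.
- move=> i' l'; rewrite htau (minn_idPr (leqnSn Np)).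
  rewrite -L2 -(L3 (T *m wv l') c1) -L1; apply: vle_sum => // b.
  by have [_ [_ [_ [_ Hterm]]]] := Hleaf (b :: p) hp; apply: Hterm.
Qed.
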